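(* Let $\omega\in\Omega$ and consider the contours of $\phi(\omega)$. (I) If there exist at least two infinite contours, then there exists an infinite $0$-cluster or an infinite $1$-cluster. (II) If $C_1$ and $C_2$ are two distinct infinite contours, then there exists an infinite cluster incident to $C_1$. (III) If $\xi$ is a cluster incident to two distinct infinite contours, then $\xi$ is infinite. (IV) Suppose $C_1$ is an infinite contour and $\mathcal{C}$ is a nonempty collection of infinite contours with $C_1\notin\mathcal{C}$; let $R$ be the unbounded component of $\mathbb{R}^2\setminus\bigcup_{C\in\mathcal{C}}C$ containing $C_1$. Then there is an infinite cluster contained in $R$.
   Context: Let $G$ be the square grid with vertex set $\mathbb{Z}^2$ and nearest-neighbour edges. The face of $G$ with lower-left corner $(m,n)$ is black if $m+n$ is even, white otherwise. $\Omega\subset\{0,1\}^{\mathbb{Z}^2}$ is the set of $\omega$ such that for every black face the states of its four vertices, listed clockwise from the lower-left corner, form one of $0000,1111,0011,1100,0110,1001$. A cluster of $\omega$ is a maximal $G$-connected set of vertices on which $\omega$ is constant ($0$-cluster or $1$-cluster), infinite if it has infinitely many vertices. Let $\mathbb{L}_1$ have vertices $(m-\tfrac12,n+\tfrac12)$, $m,n$ both even, and $\mathbb{L}_2$ vertices $(m-\tfrac12,n+\tfrac12)$, $m,n$ both odd; in each, two vertices are joined by an edge (a closed segment of length $2$) iff at Euclidean distance $2$. The center of each black face $F$ is the midpoint of exactly one edge $e_1$ of $\mathbb{L}_1$ and one edge $e_2$ of $\mathbb{L}_2$. Define $\phi(\omega)\in\{0,1\}^{E(\mathbb{L}_1)\cup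 E(\mathbb{L}_2)}$: if the configuration around $F$ is $0000$ or $1111$ both $e_1,e_2$ get $0$; if the two upper vertices share a state different from the two lower ones, the horizontal one of $e_1,e_2$ gets $1$, the vertical $0$; if the two left vertices share a state different from the two right ones, the vertical one gets $1$, the horizontal $0$. Edges with value $1$ are present. A contour is a connected component of the set of present edges, viewed as a subset of $\mathbb{R}^2$ (union of its edges); it is infinite if it has infinitely many edges. A cluster is incident to a contour if some vertex of the cluster is at Euclidean distance $\tfrac12$ from some edge (segment) of the contour. *)

(* Defs.v *)
From mathcomp Require Import all_boot all_order all_algebra.
From mathcomp Require Import all_classical all_reals all_analysis.
Set Implicit Arguments. Unset Strict Implicit. Unset Printing Implicit Defensive.
Import Order.TTheory GRing.Theory Num.Theory.
Import numFieldTopology.Exports numFieldNormedType.Exports.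
Local Open Scope classical_set_scope.
Local Open Scope ring_scope.

(* Vertices of G are Z^2 = int * int; configurations omega : Z^2 -> {0,1}
   encoded as bool (true = 1). *)
Definition vtx := (int * int)%type.
Definition config := vtx -> bool.

(* the face with lower-left corner (m,n) is black iff m+n is even *)
Definition black (m n : int) : Prop := (2 %| (m + n))%Z.

Definition LL (m n : int) : vtx := (m, n).
Definition UL (m n : int) : vtx := (m, n + 1).
Definition UR (m n : int) : vtx := (m + 1, n + 1).
Definition LR (m n : int) : vtx := (m + 1, n).

Definition allowed (a b c d : bool) : Prop :=
  (a, b, c, d) \in [:: (false, false, false, false); (true, true, true, true);
                      (false, false, true, true); (true, true, false, false);
                      (false, true, true, false); (true, false, false, true)].

Definition in_Omega (w : config) : Prop :=
  forall m n : int, black m n ->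
    allowed (w (LL m n)) (w (UL m n)) (w (UR m n)) (w (LR m n)).

Definition G_adj (u v : vtx) : Prop :=
  (u.1 = v.1 /\ (u.2 - v.2 = 1 \/ v.2 - u.2 = 1)) \/
  (u.2 = v.2 /\ (u.1 - v.1 = 1 \/ v.1 - u.1 = 1)).

Definition G_connected (S : set vtx) : Prop :=
  forall u v, S u -> S v ->
    exists p : seq vtx, [/\ head u p = u, last u p = v,
      (forall x, x \in p -> S x) &
      (forall i, (i.+1 < size p)%N -> G_adj (nth u p i) (nth u p i.+1))].

Definition const_on (w : config) (S : set vtx) : Prop :=
  forall u v, S u -> S v -> w u = w v.

Definition is_cluster (w : config) (xi : set vtx) : Prop :=
  [/\ xi !=set0, G_connected xi, const_on w xi &
      forall S : set vtx, xi `<=` S -> G_connected S -> const_on w S -> S = xi].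

Definition infinite_cluster (w : config) (xi : set vtx) : Prop :=
  is_cluster w xi /\ infinite_set xi.

(* A dual vertex (m - 1/2, n + 1/2) is labelled by (m,n), with m,n both even
   (L1) or both odd (L2).  An edge of L1 or L2 is labelled by its lower/left
   endpoint (m,n) and a direction: horizontal edges join (m,n) to (m+2,n),
   vertical edges join (m,n) to (m,n+2). *)
Record dedge := DEdge { de_m : int; de_n : int; de_horiz : bool }.

Definition is_edge (e : dedge) : Prop :=
  ((2 %| de_m e) && (2 %| de_n e))%Z \/
  (~~ (2 %| de_m e) && ~~ (2 %| de_n e))%Z.

Definition in_L1 (e : dedge) : Prop := ((2 %| de_m e) && (2 %| de_n e))%Z.
Definition in_L2 (e : dedge) : Prop := (~~ (2 %| de_m e) && ~~ (2 %| de_n e))%Z.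

(* lower-left corner of the (black) face whose center is the midpoint of e:
   horizontal edge (m,n): midpoint (m+1/2, n+1/2) -> face (m, n);
   vertical edge (m,n): midpoint (m-1/2, n+3/2) -> face (m-1, n+1). *)
Definition face_of (e : dedge) : int * int :=
  if de_horiz e then (de_m e, de_n e) else (de_m e - 1, de_n e + 1).

Definition present (w : config) (e : dedge) : Prop :=
  is_edge e /\
  let (a, b) := face_of e in
  if de_horiz e then
    [/\ w (UL a b) = w (UR a b), w (LL a b) = w (LR a b) & w (UL a b) <> w (LL a b)]
  else
    [/\ w (LL a b) = w (UL a b), w (LR a b) = w (UR a b) & w (LL a b) <> w (LR a b)].

Section Geometry.
Variable R : realType.

Definition vpt (v : vtx) : R * R := ((v.1)%:~R, (v.2)%:~R).

Definition dseg (e : dedge) : set (R * R) :=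
  if de_horiz e then
    [set p | p.2 = (de_n e)%:~R + 2^-1 /\
             (de_m e)%:~R - 2^-1 <= p.1 <= (de_m e)%:~R + 3 / 2]
  else
    [set p | p.1 = (de_m e)%:~R - 2^-1 /\
             (de_n e)%:~R + 2^-1 <= p.2 <= (de_n e)%:~R + 5 / 2].

Definition present_set (w : config) : set (R * R) :=
  \bigcup_(e in [set e | present w e]) dseg e.

Definition is_contour (w : config) (C : set (R * R)) : Prop :=
  exists2 x, present_set w x & C = connected_component (present_set w) x.

Definition contour_edges (w : config) (C : set (R * R)) : set dedge :=
  [set e | present w e /\ dseg e `<=` C].

Definition infinite_contour (w : config) (C : set (R * R)) : Prop :=
  is_contour w C /\ infinite_set (contour_edges w C).

Definition eucl (p q : R * R) : R :=
  Num.sqrt ((p.1 - q.1) ^+ 2 + (p.2 - q.2) ^+ 2).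

Definition dist_set (p : R * R) (A : set (R * R)) : R :=
  inf [set eucl p q | q in A].

Definition is_incident (w : config) (xi : set vtx) (C : set (R * R)) : Prop :=
  exists v e, [/\ xi v, contour_edges w C e & dist_set (vpt v) (dseg e) = 2^-1].

End Geometry.

(* Main.v *)
Require Import Defs.
From mathcomp Require Import all_boot all_order all_algebra.
From mathcomp Require Import all_classical all_reals all_analysis.
From mathcomp Require Import zify ring lra.
Import Order.TTheory GRing.Theory Num.Theory.
Import numFieldTopology.Exports numFieldNormedType.Exports.
Local Open Scope classical_set_scope.
Local Open Scope ring_scope.

Set Implicit Arguments. Unset Strict Implicit. Unset Printing Implicit Defensive.

Definition nb (u : vtx) (d : bool) : vtx := if d then (u.1 + 1, u.2) else (u.1, u.2 + 1).
Definition adj (u v : vtx) := exists d, v = nb u d \/ u = nb v d.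
Definition blk (a b : int) : bool := (2 %| (a + b))%Z.
Definition crs (u : vtx) (d : bool) : dedge :=
  if d then (if blk u.1 u.2 then DEdge (u.1+1) (u.2-1) false else DEdge (u.1+1) (u.2-2) false)
  else (if blk u.1 u.2 then DEdge u.1 u.2 true else DEdge (u.1-1) u.2 true).
Definition end0 (e : dedge) : int * int := (de_m e - 1, de_n e).
Definition end1 (e : dedge) : int * int :=
  if de_horiz e then (de_m e + 1, de_n e) else (de_m e - 1, de_n e + 2).
Definition ends (e : dedge) (W : int * int) := W = end0 e \/ W = end1 e.
Definition share (e e' : dedge) := exists W, ends e W /\ ends e' W.
Definition corner (W : int * int) (v : vtx) :=
  v = W \/ v = (W.1, W.2 + 1) \/ v = (W.1 + 1, W.2 + 1) \/ v = (W.1 + 1, W.2).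
Definition isside (W : int * int) (u : vtx) (d : bool) :=
  (u = W /\ d = false) \/ (u = (W.1 + 1, W.2) /\ d = false) \/
  (u = W /\ d = true) \/ (u = (W.1, W.2 + 1) /\ d = true).

Lemma adj_sym u v : adj u v -> adj v u.
Proof. by case=> d [] h; exists d; [right|left]. Qed.

Lemma adj_nb u d : adj u (nb u d).
Proof. by exists d; left. Qed.

Section Omega.
Variable w : config.
Hypothesis hw : in_Omega w.

Lemma omega_black a b : blk a b ->
  (w (a, b) = w (a, b + 1) /\ w (a + 1, b) = w (a + 1, b + 1)) \/
  (w (a, b) = w (a + 1, b) /\ w (a, b + 1) = w (a + 1, b + 1)).
Proof.
move=> hb; have := hw hb; rewrite /allowed /LL /UL /UR /LR.
case: (w (a, b)); case: (w (a, b + 1)); case: (w (a + 1, b + 1)); case: (w (a + 1, b));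
by rewrite !inE /=; move=> h; (try by left); (try by right).
Qed.

Lemma omegaH a b : blk a b -> w (a, b) <> w (a, b + 1) \/ w (a + 1, b) <> w (a + 1, b + 1) ->
  w (a, b) = w (a + 1, b) /\ w (a, b + 1) = w (a + 1, b + 1).
Proof.
move=> hb hd; have := hw hb; rewrite /allowed /LL /UL /UR /LR.
move: hd.
case: (w (a, b)); case: (w (a, b + 1)); case: (w (a + 1, b + 1)); case: (w (a + 1, b));
by rewrite !inE /= => -[] //.
Qed.

Lemma omegaV a b : blk a b -> w (a, b) <> w (a + 1, b) \/ w (a, b + 1) <> w (a + 1, b + 1) ->
  w (a, b) = w (a, b + 1) /\ w (a + 1, b) = w (a + 1, b + 1).
Proof.
move=> hb hd; have := hw hb; rewrite /allowed /LL /UL /UR /LR.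
move: hd.
case: (w (a, b)); case: (w (a, b + 1)); case: (w (a + 1, b + 1)); case: (w (a + 1, b));
by rewrite !inE /= => -[] //.
Qed.

End Omega.

Set Implicit Arguments. Unset Strict Implicit. Unset Printing Implicit Defensive.

Section Pres.
Variable w : config.
Hypothesis hw : in_Omega w.

Lemma zs1 (a : int) : a + 1 - 1 = a. Proof. lia. Qed.
Lemma zs2 (a : int) : a - 1 + 1 = a. Proof. lia. Qed.
Lemma zs3 (a : int) : a - 2 + 1 = a - 1. Proof. lia. Qed.
Lemma zs4 (a : int) : a - 1 + 1 + 1 = a + 1. Proof. lia. Qed.

Lemma present_crs_diff u d : present w (crs u d) -> w u <> w (nb u d).
Proof.
case: u => a b; rewrite /present /crs /nb /face_of /=.
case: d; case: (blk a b) => /= -[_];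
rewrite ?zs1 ?zs2 ?zs3 /UL /UR /LL /LR ?zs2 ?zs4;
move=> [h1 h2 h3] h4;
try set x1 := w (a, b) in h1 h2 h3 h4 *; try set x2 := w (a, b + 1) in h1 h2 h3 h4 *;
try set x3 := w (a + 1, b) in h1 h2 h3 h4 *; try set x4 := w (a + 1, b + 1) in h1 h2 h3 h4 *;
try set x5 := w (a, b - 1) in h1 h2 h3 h4 *; try set x6 := w (a + 1, b - 1) in h1 h2 h3 h4 *;
apply: h3; congruence.
Qed.

Lemma zs5 (a : int) : a - 2 + 1 + 1 = a. Proof. lia. Qed.

Lemma blk_edge m n h : blk m n -> is_edge (DEdge m n h).
Proof. rewrite /blk /is_edge /=. lia. Qed.

Lemma blkN a b : ~~ blk a b -> blk (a - 1) b /\ blk a (b - 1) /\ blk (a+1) b /\ blk a (b+1).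
Proof. rewrite /blk. lia. Qed.

Ltac setw a b := try set x1 := w (a, b) in *; try set x2 := w (a, b + 1) in *;
try set x3 := w (a + 1, b) in *; try set x4 := w (a + 1, b + 1) in *;
try set x5 := w (a, b - 1) in *; try set x6 := w (a + 1, b - 1) in *;
try set x7 := w (a - 1, b) in *; try set x8 := w (a - 1, b + 1) in *.

Lemma diff_present u d : w u <> w (nb u d) -> present w (crs u d).
Proof.
case: u => a b; rewrite /present /crs /nb /face_of /=.
case: d; case hb: (blk a b) => /= hd.
  split; first by apply: blk_edge; move: hb; rewrite /blk; lia.
  rewrite zs1 zs2 /LL /UL /UR /LR.
  by have [h1 h2] := omegaV hw hb (or_introl hd); split.
  have [h0 [h0' _]] := blkN (negbT hb).
  split; first by apply: blk_edge; move: hb; rewrite /blk; lia.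
  rewrite zs1 zs3 /LL /UL /UR /LR zs2.
  have hd' : w (a, b - 1 + 1) <> w (a + 1, b - 1 + 1) by rewrite zs2.
  have [h1 h2] := omegaV hw h0' (or_intror hd'). rewrite zs2 in h1 h2.
  by split => //; rewrite h1 h2.
  split; first by apply: blk_edge.
  rewrite /LL /UL /UR /LR.
  have [h1 h2] := omegaH hw hb (or_introl hd).
  by split; [exact: h2 | exact: h1 | move=> h; apply: hd; rewrite h].
have [h0 _] := blkN (negbT hb).
split; first by apply: blk_edge; move: hb; rewrite /blk; lia.
rewrite /LL /UL /UR /LR zs2.
have hd' : w (a - 1 + 1, b) <> w (a - 1 + 1, b + 1) by rewrite zs2.
have [h1 h2] := omegaH hw h0 (or_intror hd'). rewrite zs2 in h1 h2.
by split; [exact: h2 | exact: h1 | move=> h; apply: hd; rewrite -h1 -h2 h].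
Qed.
End Pres.

Set Implicit Arguments. Unset Strict Implicit. Unset Printing Implicit Defensive.

Lemma pairE (a b c d : int) : a = c -> b = d -> ((a, b) : vtx) = (c, d).
Proof. by move=> -> ->. Qed.

Lemma dedgeE a b c d h : a = c -> b = d -> DEdge a b h = DEdge c d h.
Proof. by move=> -> ->. Qed.

Lemma corner_crs w e v : present w e -> corner (face_of e) v ->
  exists u d, crs u d = e /\ (v = u \/ v = nb u d).
Proof.
case: e => m n [] [he _]; rewrite /face_of /corner /=.
- have hb : blk m n by move: he; rewrite /is_edge /blk /=; lia.
  have hb' : blk (m + 1) n = false by move: he; rewrite /is_edge /blk /=; lia.
  case=> [->|[->|[->|->]]].
  + by exists (m, n), false; rewrite /crs /= hb; split => //; left.
  + by exists (m, n), false; rewrite /crs /= hb; split => //; right.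
  + exists (m + 1, n), false; rewrite /crs /= hb'; split; last by right.
    by apply: dedgeE => //; lia.
  + exists (m + 1, n), false; rewrite /crs /= hb'; split; last by left.
    by apply: dedgeE => //; lia.
- have hb : blk (m - 1) (n + 1) by move: he; rewrite /is_edge /blk /=; lia.
  have hb' : blk (m - 1) (n + 1 + 1) = false by move: he; rewrite /is_edge /blk /=; lia.
  case=> [->|[->|[->|->]]].
  + exists (m - 1, n + 1), true; rewrite /crs /= hb; split; last by left.
    by apply: dedgeE; lia.
  + exists (m - 1, n + 1 + 1), true; rewrite /crs /= hb'; split; last by left.
    by apply: dedgeE; lia.
  + exists (m - 1, n + 1 + 1), true; rewrite /crs /= hb'; split; last by right.
    by apply: dedgeE; lia.
  + exists (m - 1, n + 1), true; rewrite /crs /= hb; split; last by right.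
    by apply: dedgeE; lia.
Qed.

Lemma crs_corner u d : corner (face_of (crs u d)) u /\ corner (face_of (crs u d)) (nb u d).
Proof.
case: u => a b; rewrite /crs /face_of /corner /nb /=.
case: d; case: (blk a b) => /=.
- split; [left|right; right; right]; apply: pairE; lia.
- split; [right; left|right; right; left]; apply: pairE; lia.
- split; [left|right; left]; apply: pairE; lia.
- split; [right; right; right|right; right; left]; apply: pairE; lia.
Qed.

Lemma white_ends W u d : ~~ blk W.1 W.2 -> isside W u d -> ends (crs u d) W.
Proof.
case: W => a b /= hw.
have [h1 [h2 [h3 h4]]] := blkN hw.
rewrite /isside /ends /end0 /end1 /crs /=.
case=> [[-> ->]|[[-> ->]|[[-> ->]|[-> ->]]]] /=.
- by rewrite (negbTE hw) /=; right; apply: pairE; lia.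
- by rewrite h3 /=; left; apply: pairE; lia.
- by rewrite (negbTE hw) /=; right; apply: pairE; lia.
- by rewrite h4 /=; left; apply: pairE; lia.
Qed.

Lemma side_white u d : exists W, ~~ blk W.1 W.2 /\ isside W u d.
Proof.
case: u => a b; case: d; case hb: (blk a b).
- exists (a, b - 1); split; first by move: hb; rewrite /blk /=; lia.
  by right; right; right; split => //; apply: pairE => /=; lia.
- by exists (a, b); split; [rewrite hb | right; right; left].
- exists (a - 1, b); split; first by move: hb; rewrite /blk /=; lia.
  by right; left; split => //; apply: pairE => /=; lia.
- by exists (a, b); split; [rewrite hb | left].
Qed.

Lemma side_corner W u d : isside W u d -> corner W u /\ corner W (nb u d).
Proof.
case: W => a b; rewrite /isside /corner /nb /=.
case=> [[-> ->]|[[-> ->]|[[-> ->]|[-> ->]]]] /=.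
- by split; [left | right; left].
- by split; right; right; [right | left].
- by split; [left | right; right; right].
- by split; right; [left | right; left].
Qed.

Lemma mixed (P : vtx -> Prop) W c c' : corner W c -> P c -> corner W c' -> ~ P c' ->
  exists u d, isside W u d /\ ~ (P u <-> P (nb u d)).
Proof.
case: W => a b.
move=> hc hp hc' hp'.
  have [H1|H1] := pselect (P (a, b) <-> P (a, b + 1)); last first.
    by exists (a, b), false; split; [left|].
  have [H2|H2] := pselect (P (a + 1, b) <-> P (a + 1, b + 1)); last first.
    by exists (a + 1, b), false; split; [right; left|].
  have [H3|H3] := pselect (P (a, b) <-> P (a + 1, b)); last first.
    by exists (a, b), true; split; [right; right; left|].
  have [H4|H4] := pselect (P (a, b + 1) <-> P (a + 1, b + 1)); last first.
    by exists (a, b + 1), true; split; [right; right; right|].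
  exfalso; apply: hp'.
move: hc hc' hp; rewrite /corner /=.
case=> [->|[->|[->|->]]]; case=> [->|[->|[->|->]]]; move=> hp;
  first [ exact hp | exact (H1.1 hp) | exact (H1.2 hp) | exact (H2.1 hp) | exact (H2.2 hp)
        | exact (H3.1 hp) | exact (H3.2 hp) | exact (H4.1 hp) | exact (H4.2 hp)
        | exact (H4.1 (H1.1 hp)) | exact (H2.1 (H3.1 hp)) | exact (H1.2 (H4.2 hp))
        | exact (H3.2 (H2.2 hp)) | exact (H2.2 (H4.1 hp)) | exact (H4.2 (H2.1 hp))
        | exact (H3.1 (H1.2 hp)) | exact (H1.1 (H3.2 hp)) ].
Qed.

Lemma pattern w e : present w e -> exists c1 c2,
  [/\ corner (end0 e) c1, corner (end1 e) c2, c2 = nb c1 (de_horiz e) & w c1 = w c2].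
Proof.
case: e => m n [] [he]; rewrite /face_of /end0 /end1 /corner /nb /LL /UL /UR /LR /= => -[h1 h2 h3].
- exists (m, n), (m + 1, n); split => //.
  + by right; right; right; apply: pairE => /=; lia.
  + by left.
- exists (m - 1, n + 1), (m - 1, n + 1 + 1); split => //.
  + by right; left.
  + by left; apply: pairE => /=; lia.
Qed.

Set Implicit Arguments. Unset Strict Implicit. Unset Printing Implicit Defensive.

Section Potential.
Variable K : vtx -> bool -> bool.
Variable N : int.
Hypothesis Ksupp : forall u d, N < u.1 -> K u d = false.
Hypothesis Ksq : forall u, K u true (+) K (nb u false) true (+) K u false (+) K (nb u true) false = false.

Fixpoint q (n : nat) (y : int) : bool :=
  if n is n'.+1 then K (N - n'%:Z, y) true (+) q n' y else false.

Definition pot (u : vtx) : bool :=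
  let x : int := u.1 in if (x <= N + 1)%R then q (absz (N + 1 - x)%R) u.2 else false.

Lemma pot_out u : N < u.1 -> pot u = false.
Proof.
case: u => x y /= h; rewrite /pot /=.
case: ifP => // hx.
have -> : absz (N + 1 - x)%R = 0%N by lia.
by [].
Qed.

Lemma pot_h u : pot u (+) pot (nb u true) = K u true.
Proof.
case: u => x y; rewrite /nb /=.
have [hx|hx] := leP x N; last first.
  by rewrite !pot_out //= ?Ksupp //=; lia.
rewrite /pot /=.
have -> : (x <= N + 1) = true by lia.
have -> : (x + 1 <= N + 1) = true by lia.
have -> : absz (N + 1 - x)%R = (absz (N - x)%R).+1 by lia.
have -> : absz (N + 1 - (x + 1))%R = absz (N - x)%R by lia.
rewrite /= -addbA addbb addbF.
by have -> : N - (absz (N - x)%R)%:Z = x by lia.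
Qed.

Lemma q_v n y : q n y (+) q n (y + 1) = K (N + 1 - n%:Z, y) false.
Proof.
elim: n y => [|n IH] y /=.
  by rewrite Ksupp //=; lia.
have := Ksq (N - n%:Z, y); rewrite /nb /=.
have -> : N - n%:Z + 1 = N + 1 - n%:Z by lia.
rewrite -IH.
have -> : N + 1 - n.+1%:Z = N - n%:Z by lia.
set A := K (N - n%:Z, y) true; set B := K (N - n%:Z, y + 1) true.
set C := K (N - n%:Z, y) false.
by case: A; case: B; case: C; case: (q n y); case: (q n (y + 1)).
Qed.

Lemma pot_v u : pot u (+) pot (nb u false) = K u false.
Proof.
case: u => x y; rewrite /nb /pot /=.
case: ifP => hx; last by rewrite Ksupp //=; lia.
rewrite q_v.
by have -> : N + 1 - (absz (N + 1 - x)%R)%:Z = x by lia.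
Qed.

Lemma pot_nb u d : pot u (+) pot (nb u d) = K u d.
Proof. by case: d; [apply: pot_h | apply: pot_v]. Qed.

End Potential.

Set Implicit Arguments. Unset Strict Implicit. Unset Printing Implicit Defensive.

Inductive creach (w : config) (v : vtx) : vtx -> Prop :=
| cr0 : creach w v v
| crS u u' : creach w v u -> adj u u' -> w u = w u' -> creach w v u'.

Inductive sreach (xi : set vtx) (N : int) : vtx -> Prop :=
| sr0 v : ~ xi v -> N < v.1 -> sreach xi N v
| srS u v : ~ xi u -> adj u v -> sreach xi N v -> sreach xi N u.

Lemma creach_w w v u : creach w v u -> w u = w v.
Proof. by elim=> // a a' _ IH _ <-. Qed.

Lemma creach_cons w v v' u : adj v v' -> w v = w v' -> creach w v' u -> creach w v u.
Proof.
move=> ha hw; elim=> [|a a' _ IH ha' hw'].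
  by apply: (crS (cr0 _ _) ha hw).
exact: crS IH ha' hw'.
Qed.

Lemma creach_sym w v u : creach w v u -> creach w u v.
Proof.
elim=> [|a a' _ IH ha hw]; first exact: cr0.
by apply: creach_cons (adj_sym ha) (esym hw) IH.
Qed.

Lemma creach_trans w a b c : creach w a b -> creach w b c -> creach w a c.
Proof.
move=> h1; elim=> // u u' _ IH ha hw.
exact: crS IH ha hw.
Qed.

Definition boxed (N : int) (v : vtx) := -N <= v.1 <= N /\ -N <= v.2 <= N.

Section Core.
Variable w : config.
Hypothesis hw : in_Omega w.
Variable b0 : vtx.
Local Notation xi := (creach w b0).
Variable N : int.
Hypothesis Hbox : forall v, xi v -> boxed N v.
Local Notation S := (sreach xi N).

Lemma S_nxi v : S v -> ~ xi v.
Proof. by case. Qed.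

Lemma xi_nS v : xi v -> ~ S v.
Proof. by move=> h hs; apply: S_nxi hs h. Qed.

Lemma S_adj u v : adj u v -> w u = w v -> (S u <-> S v).
Proof.
have H : forall u v, adj u v -> w u = w v -> S u -> S v.
  move=> a c ha he hs.
  have hc : ~ xi c.
    move=> hx; apply: (S_nxi hs).
    exact: crS hx (adj_sym ha) (esym he).
  exact: srS hc (adj_sym ha) hs.
move=> ha he; split; first exact: H ha he.
exact: H (adj_sym ha) (esym he).
Qed.

Lemma S_bd u v : S u -> ~ S v -> adj u v -> xi v /\ w u <> w v.
Proof.
move=> hu hv ha; split.
  by apply: contrapT => hx; apply: hv; apply: srS hx (adj_sym ha) hu.
by move=> he; apply: hv; apply/(S_adj ha he).
Qed.

Lemma S_right_row k : forall v : vtx, (N < v.2 \/ v.2 < -N) -> N - v.1 < k%:Z -> S v.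
Proof.
elim: k => [|k IH] [x y] /= hy hk.
  apply: sr0 => /= [hx|]; last by lia.
  by have := Hbox hx; rewrite /boxed /=; lia.
have hx : ~ xi (x, y) by move=> hx; have := Hbox hx; rewrite /boxed /=; lia.
have [h|h] := ltP N x; first by apply: sr0.
apply: srS hx (adj_nb (x, y) true) _.
by apply: IH => /=; lia.
Qed.

Lemma S_left k : forall v : vtx, v.1 < -N -> N - v.2 < k%:Z -> S v.
Proof.
elim: k => [|k IH] [x y] /= hx hk.
  apply: (@S_right_row (absz (N - x + 1))%R) => /=; lia.
have hn : ~ xi (x, y) by move=> h; have := Hbox h; rewrite /boxed /=; lia.
have [h|h] := ltP N y.
  apply: (@S_right_row (absz (N - x + 1))%R) => /=; lia.
apply: srS hn (adj_nb (x, y) false) _.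
by apply: IH => /=; lia.
Qed.

Lemma box_S v : ~ S v -> boxed N v.
Proof.
case: v => x y hs; rewrite /boxed /=.
have [h1|h1] := ltP N x; first by exfalso; apply: hs; apply: sr0 => //= h;
  have := Hbox h; rewrite /boxed /=; lia.
have [h2|h2] := ltP x (-N).
  by exfalso; apply: hs; apply: (@S_left (absz (N - y + 1))%R) => /=; lia.
have [h3|h3] := ltP N y.
  by exfalso; apply: hs; apply: (@S_right_row (absz (N - x + 1))%R) => /=; lia.
have [h4|h4] := ltP y (-N).
  by exfalso; apply: hs; apply: (@S_right_row (absz (N - x + 1))%R) => /=; lia.
lia.
Qed.

End Core.

Set Implicit Arguments. Unset Strict Implicit. Unset Printing Implicit Defensive.

Lemma ends_white w e W : present w e -> ends e W -> ~~ blk W.1 W.2.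
Proof.
case: e => m n h [he _]; move: he; rewrite /is_edge /ends /end0 /end1 /blk /=.
by case: h => /= he [->|->] /=; lia.
Qed.

Lemma fin_int (N : int) : finite_set [set k : int | -N <= k <= N].
Proof.
apply: (@sub_finite_set _ _ [set (-N + i%:Z) | i in `I_(absz (N + N + 1))%R]).
  move=> k /= hk.
  exists (absz (k + N))%R; first by rewrite /= /mkset; lia.
  simpl; lia.
apply: finite_image; exact: finite_II.
Qed.

Lemma fin_bool : finite_set [set: bool].
Proof.
apply/finite_seqP; exists [:: true; false].
by apply/seteqP; split => [[]|[]] //=; rewrite /mkset ?inE.
Qed.

Lemma fin_edges (N : int) : finite_set [set e : dedge | -N <= de_m e - 1 <= N /\ -N <= de_n e <= N].
Proof.
apply: (@sub_finite_set _ _ [set DEdge (t.1.1 + 1) t.1.2 t.2 |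
   t in ([set k : int | -N <= k <= N] `*` [set k : int | -N <= k <= N]) `*` [set: bool]]).
  case=> m n h /= [h1 h2].
  exists ((m - 1, n), h).
    by split => //; split => /=; rewrite /mkset.
  by rewrite /= zs2.
apply: finite_image; apply: finite_setX; last exact: fin_bool.
by apply: finite_setX; apply: fin_int.
Qed.

Section Contour.
Variable w : config.
Hypothesis hw : in_Omega w.
Variable b0 : vtx.
Local Notation xi := (creach w b0).
Variable N : int.
Hypothesis Hbox : forall v, xi v -> boxed N v.
Local Notation S := (sreach xi N).
Definition dXc u d := ~ (S u <-> S (nb u d)).
Definition allX W := forall c, corner W c -> ~ S c.

Variable E : set dedge.
Hypothesis HE1 : forall e, E e -> present w e.
Hypothesis HE2 : forall e e', E e -> present w e' -> share e e' -> E e'.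
Hypothesis HE3 : forall Q : dedge -> Prop,
  (forall e e', E e -> E e' -> share e e' -> Q e -> Q e') ->
  forall e e', E e -> E e' -> Q e -> Q e'.
Hypothesis Hinf : infinite_set E.

Lemma dX_present u d : dXc u d -> present w (crs u d).
Proof.
move=> hd; apply: diff_present => //.
have [hs|hs] := pselect (S u).
  have hn : ~ S (nb u d) by move=> h; apply: hd; split.
  exact: (proj2 (S_bd hs hn (adj_nb u d))).
have hn : S (nb u d) by apply: contrapT => h; apply: hd; split.
move=> he; exact: (proj2 (S_bd hn hs (adj_sym (adj_nb u d)))) (esym he).
Qed.

Lemma mixed_E e W : E e -> ends e W -> forall c c', corner W c -> S c -> corner W c' -> ~ S c' ->
  exists u d, dXc u d /\ E (crs u d).
Proof.
move=> he hW c c' hc hs hc' hs'.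
have [u [d [hside hd]]] := mixed hc hs hc' hs'.
exists u, d; split => //.
apply: (HE2 he (dX_present hd)).
exists W; split => //.
exact: white_ends (ends_white (HE1 he) hW) hside.
Qed.

Hypothesis Hno : forall u d, dXc u d -> ~ E (crs u d).

Lemma propag e W W' : E e -> ends e W -> ends e W' -> allX W -> allX W'.
Proof.
move=> he hW hW' hX.
have [c1 [c2 [hc1 hc2 hn heq]]] := pattern (HE1 he).
have hadj : adj c1 c2 by rewrite hn; apply: adj_nb.
have hS12 := S_adj b0 N hadj heq.
suff [c [hc hcX]] : exists c, corner W' c /\ ~ S c.
  move=> c' hc' hs'.
  have [u [d [h1 h2]]] := mixed_E he hW' hc' hs' hc hcX.
  exact: Hno h1 h2.
move: hX; case: hW => -> hX; case: hW' => ->.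
- by exists c1; split => //; apply: hX.
- by exists c2; split => //; move/hS12; apply: hX.
- by exists c1; split => //; move/hS12; apply: hX.
- by exists c2; split => //; apply: hX.
Qed.

Lemma trapped e0 W : E e0 -> ends e0 W -> allX W -> False.
Proof.
move=> he0 hW hX.
pose Q e := allX (end0 e) /\ allX (end1 e).
have hQ0 : Q e0.
  split; apply: (propag he0 hW) => //; rewrite /ends; tauto.
have hQ : forall e, E e -> Q e.
  move=> e he; apply: (HE3 _ he0 he hQ0) => a a' ha ha' [W' [h1 h2]] [q0 q1].
  have hW' : allX W' by case: h1 => ?; subst.
  split; apply: (propag ha' h2) => //; rewrite /ends; tauto.
apply: Hinf; apply: sub_finite_set (fin_edges N).
move=> e /hQ [h0 _].
have : ~ S (end0 e) by apply: h0; left.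
move/(box_S Hbox); rewrite /boxed /end0 /=.
by case=> h1 h2; split.
Qed.

End Contour.

Set Implicit Arguments. Unset Strict Implicit. Unset Printing Implicit Defensive.

Section Core2.
Variable w : config.
Hypothesis hw : in_Omega w.
Variable b0 : vtx.
Local Notation xi := (creach w b0).
Variable N : int.
Hypothesis Hbox : forall v, xi v -> boxed N v.
Local Notation S := (sreach xi N).
Local Notation dX := (dXc w b0 N).

Variable E : set dedge.
Hypothesis HE1 : forall e, E e -> present w e.
Hypothesis HE2 : forall e e', E e -> present w e' -> share e e' -> E e'.
Hypothesis HE3 : forall Q : dedge -> Prop,
  (forall e e', E e -> E e' -> share e e' -> Q e -> Q e') ->
  forall e e', E e -> E e' -> Q e -> Q e'.
Hypothesis Hinf : infinite_set E.

Lemma core1 u0 d0 : E (crs u0 d0) -> ~ S u0 \/ ~ S (nb u0 d0) ->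
  exists u d, dX u d /\ E (crs u d).
Proof.
move=> he0 hn0; apply: contrapT => hne.
have Hno : forall u d, dX u d -> ~ E (crs u d) by move=> u d h1 h2; apply: hne; exists u, d.
have h0 : ~ dX u0 d0 by move=> h; exact: Hno h he0.
have [hu0 hnu0] : ~ S u0 /\ ~ S (nb u0 d0).
  by case: hn0 => h; split => // h'; apply: h0 => -[h1 h2]; apply: h; auto.
have [W [hW hside]] := side_white u0 d0.
have hends := white_ends hW hside.
have [hc1 hc2] := side_corner hside.
have [hA|hA] := pselect (allX w b0 N W).
  exact: (trapped hw Hbox HE1 HE2 HE3 Hinf Hno he0 hends hA).
apply: hA => c hc hs.
have [u [d [h1 h2]]] := mixed_E hw HE1 HE2 he0 hends hc hs hc1 hu0.
exact: Hno h1 h2.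
Qed.

Lemma dX_w u d : dX u d -> w u <> w (nb u d).
Proof.
move=> hd he; apply: hd; exact: (S_adj b0 N (adj_nb u d) he).
Qed.

Lemma asb_iff (P Q : Prop) : `[< ~ (P <-> Q) >] = `[< P >] (+) `[< Q >].
Proof.
case: (asboolP P) => hp; case: (asboolP Q) => hq /=.
- by apply: asboolF => h; apply: h.
- by apply: asboolT => -[h _]; apply: hq; apply: h.
- by apply: asboolT => -[_ h]; apply: hp; apply: h.
- by apply: asboolF => h; apply: h; split.
Qed.

Definition Kb u d : bool := `[< dX u d /\ E (crs u d) >].

Lemma Kb_supp u d : N < u.1 -> Kb u d = false.
Proof.
move=> hu; apply: asboolF => -[hd _]; apply: hd.
have hS : forall v, N < v.1 -> S v.
  case=> x y /= hv; apply: sr0 => // hx; have := Hbox hx; rewrite /boxed /=; lia.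
have hn : N < (nb u d).1 by case: u hu => x y; case: d => /=; lia.
by split => _; apply: hS.
Qed.

Lemma crs_black_h a b : blk a b -> crs (a, b) true = crs (a, b + 1) true.
Proof.
rewrite /crs /= => hb; rewrite hb.
have -> : blk a (b + 1) = false by move: hb; rewrite /blk; lia.
by congr DEdge; lia.
Qed.

Lemma crs_black_v a b : blk a b -> crs (a, b) false = crs (a + 1, b) false.
Proof.
rewrite /crs /= => hb; rewrite hb.
have -> : blk (a + 1) b = false by move: hb; rewrite /blk; lia.
by congr DEdge; lia.
Qed.

Lemma Kb_sq u : Kb u true (+) Kb (nb u false) true (+) Kb u false (+) Kb (nb u true) false = false.
Proof.
case: u => a b; rewrite /nb /=.
case hb: (blk a b).
  have E1 : Kb (a, b) true = Kb (a, b + 1) true.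
    rewrite /Kb crs_black_h //; apply: asbool_equiv_eq.
    suff : dX (a, b) true <-> dX (a, b + 1) true by tauto.
    have H : dX (a, b) true \/ dX (a, b + 1) true ->
      (S (a, b) <-> S (a, b + 1)) /\ (S (a + 1, b) <-> S (a + 1, b + 1)).
      move=> hd.
      have hd' : w (a, b) <> w (a + 1, b) \/ w (a, b + 1) <> w (a + 1, b + 1).
        by case: hd => h; [left|right]; apply: (dX_w h).
      have [h1 h2] := omegaV hw hb hd'.
      split; [apply: (S_adj b0 N (adj_nb (a, b) false) h1) |
              apply: (S_adj b0 N (adj_nb (a + 1, b) false) h2)].
    rewrite /dXc /=; split => hd.
      by have [h1 h2] := H (or_introl hd); tauto.
    by have [h1 h2] := H (or_intror hd); tauto.
  have E2 : Kb (a, b) false = Kb (a + 1, b) false.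
    rewrite /Kb crs_black_v //; apply: asbool_equiv_eq.
    suff : dX (a, b) false <-> dX (a + 1, b) false by tauto.
    have H : dX (a, b) false \/ dX (a + 1, b) false ->
      (S (a, b) <-> S (a + 1, b)) /\ (S (a, b + 1) <-> S (a + 1, b + 1)).
      move=> hd.
      have hd' : w (a, b) <> w (a, b + 1) \/ w (a + 1, b) <> w (a + 1, b + 1).
        by case: hd => h; [left|right]; apply: (dX_w h).
      have [h1 h2] := omegaH hw hb hd'.
      split; [apply: (S_adj b0 N (adj_nb (a, b) true) h1) |
              apply: (S_adj b0 N (adj_nb (a, b + 1) true) h2)].
    rewrite /dXc /=; split => hd.
      by have [h1 h2] := H (or_introl hd); tauto.
    by have [h1 h2] := H (or_intror hd); tauto.
  by rewrite E1 E2 addbb addFb addbb.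
pose W : int * int := (a, b).
have hW : ~~ blk W.1 W.2 by rewrite /= hb.
have Hall : (exists s d, isside W s d /\ Kb s d) ->
    forall s d, isside W s d -> Kb s d = `[< dX s d >].
  move=> [s0 [d0 [hs0 /asboolP [hd0 he0]]]] s d hs.
  apply: asbool_equiv_eq; split => [[]//|hd]; split => //.
  apply: (HE2 he0 (dX_present hw hd)).
  exists W; split; [exact: white_ends hW hs0 | exact: white_ends hW hs].
have i1 : isside W (a, b) true by right; right; left.
have i2 : isside W (a, b + 1) true by right; right; right.
have i3 : isside W (a, b) false by left.
have i4 : isside W (a + 1, b) false by right; left.
have [hex|hex] := pselect (exists s d, isside W s d /\ Kb s d); last first.
  have hF : forall s d, isside W s d -> Kb s d = false.
    by move=> s d hs; apply/negbTE/negP => hk; apply: hex; exists s, d.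
  by rewrite (hF _ _ i1) (hF _ _ i2) (hF _ _ i3) (hF _ _ i4).
rewrite (Hall hex _ _ i1) (Hall hex _ _ i2) (Hall hex _ _ i3) (Hall hex _ _ i4).
rewrite /dXc /= !asb_iff.
set s1 := `[< S (a, b) >]; set s2 := `[< S (a, b + 1) >];
set s3 := `[< S (a + 1, b) >]; set s4 := `[< S (a + 1, b + 1) >].
by case: s1; case: s2; case: s3; case: s4.
Qed.

Local Notation p := (pot Kb N).

Lemma p_nb u d : p u (+) p (nb u d) = Kb u d.
Proof. exact: (pot_nb Kb_supp Kb_sq). Qed.

Lemma p_eq a c : adj a c -> (S a <-> S c) -> p a = p c.
Proof.
move=> [d [->|->]] hs.
  have : Kb a d = false by apply: asboolF => -[hd _]; apply: hd.
  by rewrite -p_nb; case: (p a); case: (p (nb a d)).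
have : Kb c d = false by apply: asboolF => -[hd _]; apply: hd; split => h; apply/hs.
by rewrite -p_nb; case: (p c); case: (p (nb c d)).
Qed.

Lemma p_S v : S v -> p v = false.
Proof.
elim=> [x _ hx|u v0 hu ha hv IH].
  exact: pot_out.
rewrite -IH; apply: (p_eq ha).
split => // _; exact: srS hu ha hv.
Qed.

Lemma p_xi v : xi v -> p v = p b0.
Proof.
elim=> // u u' hu IH ha he.
rewrite -IH; apply: esym; apply: (p_eq ha).
have hu' : xi u' by apply: crS hu ha he.
split => h; [exfalso; exact: xi_nS hu h | exfalso; exact: xi_nS hu' h].
Qed.

Lemma p_X k : forall v : vtx, ~ S v -> N - v.1 < k%:Z -> p v = p b0.
Proof.
elim: k => [|k IH] [x y] hs /= hk.
  exfalso; apply: hs; apply: sr0 => /=; last by lia.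
  by move=> hx; have := Hbox hx; rewrite /boxed /=; lia.
have [hx|hx] := pselect (xi (x, y)); first exact: p_xi.
have hs' : ~ S (nb (x, y) true) by move=> h; apply: hs; apply: srS hx (adj_nb _ _) h.
rewrite (@p_eq (x, y) (nb (x, y) true) (adj_nb _ _)); last by split => h.
by apply: IH => //=; lia.
Qed.

Lemma p_notS v : ~ S v -> p v = p b0.
Proof. move=> hs; apply: (@p_X (absz (N - v.1 + 1))%R) => //; lia. Qed.

Lemma core2 : (exists u0 d0, dX u0 d0 /\ E (crs u0 d0)) ->
  forall u d, dX u d -> E (crs u d).
Proof.
move=> [u0 [d0 [hd0 he0]]].
have hK : Kb u0 d0 by apply/asboolP.
have hpb : p b0 = true.
  move: hK; rewrite -p_nb.
  have [hs|hs] := pselect (S u0).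
    have hn : ~ S (nb u0 d0) by move=> h; apply: hd0; split.
    by rewrite (p_S hs) (p_notS hn).
  have hn : S (nb u0 d0) by apply: contrapT => h; apply: hd0; split.
  by rewrite (p_S hn) (p_notS hs) addbF.
move=> u d hd; apply: contrapT => hne.
have : Kb u d = false by apply: asboolF => -[].
rewrite -p_nb.
have [hs|hs] := pselect (S u).
  have hn : ~ S (nb u d) by move=> h; apply: hd; split.
  by rewrite (p_S hs) (p_notS hn) hpb.
have hn : S (nb u d) by apply: contrapT => h; apply: hd; split.
by rewrite (p_S hn) (p_notS hs) hpb.
Qed.

End Core2.

Set Implicit Arguments. Unset Strict Implicit. Unset Printing Implicit Defensive.

Definition inc (E : set dedge) (v : vtx) := exists u d, (v = u \/ v = nb u d) /\ E (crs u d).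

Definition contourE (w : config) (E : set dedge) :=
  [/\ forall e, E e -> present w e,
      forall e e', E e -> present w e' -> share e e' -> E e',
      forall Q : dedge -> Prop,
        (forall e e', E e -> E e' -> share e e' -> Q e -> Q e') ->
        forall e e', E e -> E e' -> Q e -> Q e' &
      infinite_set E].

Lemma fin_box (A : set vtx) : finite_set A -> exists N, forall v, A v -> boxed N v.
Proof.
move/finite_seqP => [s ->].
suff [N [_ hN]] : exists N : int, 0 <= N /\ forall v, v \in s -> boxed N v.
  by exists N.
elim: s => [|x s [N [hN0 hN]]]; first by exists 0.
exists (N + (absz x.1)%:Z + (absz x.2)%:Z); split; first lia.
move=> v; rewrite inE => /orP [/eqP ->|/hN]; rewrite /boxed.
  by case: x => x1 x2 /=; lia.
by case: v => v1 v2 /=; case: x => x1 x2 /=; lia.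
Qed.

Section Comb.
Variable w : config.
Hypothesis hw : in_Omega w.

Lemma inc_core E b0 N v : contourE w E -> (forall x, creach w b0 x -> boxed N x) ->
  inc E v -> ~ sreach (creach w b0) N v ->
  forall u d, dXc w b0 N u d -> E (crs u d).
Proof.
move=> [H1 H2 H3 H4] hbox [u [d [hv he]]] hS.
apply: (core2 hw hbox H2).
apply: (core1 hw hbox H1 H2 H3 H4 he).
by case: hv => <-; [left|right].
Qed.

Lemma comb3 E1 E2 b0 v1 v2 : contourE w E1 -> contourE w E2 ->
  finite_set (creach w b0) -> creach w b0 v1 -> creach w b0 v2 ->
  inc E1 v1 -> inc E2 v2 -> exists e, E1 e /\ E2 e.
Proof.
move=> hE1 hE2 /fin_box [N hbox] hv1 hv2 hi1 hi2.
have hc1 := inc_core hE1 hbox hi1 (xi_nS hv1).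
have [H1 _ H3 H4] := hE2.
have [u [d [hv he]]] := hi2.
have [u' [d' [hd _]]] : exists u d, dXc w b0 N u d /\ E2 (crs u d).
  apply: (core1 hw hbox H1 _ H3 H4 he); first by case: hE2.
  by case: hv => <-; [left|right]; apply: xi_nS.
have [u2 [d2 [hd2 he2]]] : exists u d, dXc w b0 N u d /\ E2 (crs u d).
  apply: (core1 hw hbox H1 _ H3 H4 he); first by case: hE2.
  by case: hv => <-; [left|right]; apply: xi_nS.
by exists (crs u2 d2); split => //; apply: hc1.
Qed.

Inductive ireach (I : set vtx) : vtx -> Prop :=
| ir0 v : I v -> ireach I v
| irS u v : ~ I u -> adj u v -> ireach I v -> ireach I u.

Lemma walk (I : set vtx) t : I t -> forall u, ireach I u.
Proof.
case: t => a b ht.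
suff H : forall n : nat, forall u : vtx, ((absz (u.1 - a))%R + (absz (u.2 - b))%R <= n)%N -> ireach I u.
  by move=> u; apply: (H _ u (leqnn _)).
elim=> [|n IH] [x y] /= hn.
  have -> : (x, y) = (a, b) by apply: pairE; lia.
  exact: ir0.
have [hI|hI] := pselect (I (x, y)); first exact: ir0.
have [h1|h1] := ltP x a.
  apply: irS hI (adj_nb (x, y) true) _; apply: IH => /=; lia.
have [h2|h2] := ltP a x.
  have ha : adj (x, y) (x - 1, y) by exists true; right; rewrite /nb /=; apply: pairE; lia.
  apply: irS hI ha _; apply: IH => /=; lia.
have [h3|h3] := ltP y b.
  apply: irS hI (adj_nb (x, y) false) _; apply: IH => /=; lia.
have [h4|h4] := ltP b y.
  have ha : adj (x, y) (x, y - 1) by exists false; right; rewrite /nb /=; apply: pairE; lia.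
  apply: irS hI ha _; apply: IH => /=; lia.
have -> : (x, y) = (a, b) by apply: pairE; lia.
exact: ir0.
Qed.

Lemma nonempty_inc E : contourE w E -> exists v, inc E v.
Proof.
move=> [H1 _ _ H4].
have [e he] : E !=set0.
  by apply/set0P/negP => /eqP h; apply: H4; rewrite h; apply: finite_set0.
have [u [d [hcr _]]] := corner_crs (v := face_of e) (H1 _ he) (or_introl erefl).
by exists u, u, d; split; [left | rewrite hcr].
Qed.

Lemma comb2 E1 E2 : contourE w E1 -> contourE w E2 -> (forall e, E1 e -> E2 e -> False) ->
  exists b, inc E1 b /\ infinite_set (creach w b).
Proof.
move=> hE1 hE2 hdis.
have [v0 hv0] := nonempty_inc hE2.
have [vT hvT] := nonempty_inc hE1.
have hr := walk hvT v0.
have key : forall u, ireach (inc E1) u -> exists b, inc E1 b /\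
   (finite_set (creach w b) -> forall N, (forall x, creach w b x -> boxed N x) ->
      ~ sreach (creach w b) N u).
  move=> u; elim=> [v hv|a c ha hac hc [b [hb IH]]].
    by exists v; split => // _ N _; apply: xi_nS; apply: cr0.
  exists b; split => // hfin N hbox hSa.
  have hSc := IH hfin N hbox.
  have hcore := inc_core hE1 hbox hb (xi_nS (cr0 w b)).
  apply: ha.
  case: hac => d [hcd|had].
    exists a, d; split; first by left.
    by apply: hcore; rewrite /dXc -hcd => -[h1 h2]; apply: hSc; apply: h1.
  exists c, d; split; first by right.
  by apply: hcore; rewrite /dXc -had => -[h1 h2]; apply: hSc; apply: h2.
have [b [hb hfin]] := key _ hr.
exists b; split => // hf.
have [N hbox] := fin_box hf.
have hS0 := hfin hf N hbox.
have hc2 := inc_core hE2 hbox hv0 hS0.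
have hc1 := inc_core hE1 hbox hb (xi_nS (cr0 w b)).
have [H1 _ H3 H4] := hE2.
have [u [d [hv he]]] := hv0.
have [u2 [d2 [hd2 he2]]] : exists u d, dXc w b N u d /\ E2 (crs u d).
  apply: (core1 hw hbox H1 _ H3 H4 he); first by case: hE2.
  by case: hv => <-; [left|right].
exact: hdis (hc1 _ _ hd2) he2.
Qed.

End Comb.

Set Implicit Arguments. Unset Strict Implicit. Unset Printing Implicit Defensive.

Section Geo.
Variable R : realType.

Lemma int_lt (a b : int) : (a%:~R : R) < b%:~R + 1 -> a <= b.
Proof.
move=> h; have : (a%:~R : R) < (b + 1)%:~R by rewrite intrD.
rewrite ltr_int; lia.
Qed.

Lemma int_half_neq (a b : int) : (a%:~R : R) <> b%:~R + 2^-1.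
Proof.
move=> h.
have h1 : a <= b by apply: int_lt; rewrite h; lra.
have h2 : b + 1 <= a.
  have : (b%:~R : R) < a%:~R by rewrite h; lra.
  rewrite ltr_int; lia.
lia.
Qed.

Definition xA (e : dedge) := de_m e - 1.
Definition xB (e : dedge) := if de_horiz e then de_m e + 1 else de_m e - 1.
Definition yC (e : dedge) := de_n e.
Definition yD (e : dedge) := if de_horiz e then de_n e else de_n e + 2.

Lemma dseg_box e p : @dseg R e p ->
  (xA e)%:~R + 2^-1 <= p.1 <= (xB e)%:~R + 2^-1 /\
  (yC e)%:~R + 2^-1 <= p.2 <= (yD e)%:~R + 2^-1.
Proof.
case: e => m n [] /=; rewrite /dseg /xA /xB /yC /yD /= => -[h1 /andP [h2 h3]];
  rewrite ?intrD ?intrB; (split; apply/andP; split); lra.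
Qed.

Lemma box_meet (A B A' B' : int) (x x' : R) :
  A%:~R + 2^-1 <= x -> x <= B%:~R + 2^-1 ->
  A'%:~R + 2^-1 <= x' -> x' <= B'%:~R + 2^-1 -> `|x - x'| < 2^-1 -> (A <= B') /\ (A' <= B).
Proof.
move=> h1 h2 h3 h4 h5; split; apply: int_lt.
  have := ler_norm (x - x'); lra.
have := ler_norm (x' - x); rewrite distrC; lra.
Qed.

Definition crossing (e e' : dedge) :=
  de_horiz e /\ ~~ de_horiz e' /\ de_m e' = de_m e + 1 /\ de_n e' = de_n e - 1.

Lemma near_int (e e' : dedge) : is_edge e -> is_edge e' ->
  xA e <= xB e' -> xA e' <= xB e -> yC e <= yD e' -> yC e' <= yD e ->
  e = e' \/ share e e' \/ crossing e e' \/ crossing e' e.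
Proof.
case: e => m n h; case: e' => m' n' h'.
rewrite /is_edge /xA /xB /yC /yD /share /ends /end0 /end1 /crossing /=.
move=> he he' h1 h2 h3 h4.
have key : (m = m' /\ n = n' /\ h = h') \/
  (exists W, (W = (m - 1, n) \/ W = (if h then (m + 1, n) else (m - 1, n + 2))) /\
             (W = (m' - 1, n') \/ W = (if h' then (m' + 1, n') else (m' - 1, n' + 2)))) \/
  (h /\ ~~ h' /\ m' = m + 1 /\ n' = n - 1) \/ (h' /\ ~~ h /\ m = m' + 1 /\ n = n' - 1).
  case: h h1 h2 h3 h4; case: h' => /= h1 h2 h3 h4.
  - have [h5|[h5|h5]] : m' = m \/ m' = m + 2 \/ m' = m - 2 by lia.
    + by left; split => //; lia.
    + right; left; exists (m + 1, n); split; [right|left]; apply: pairE; lia.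
    + right; left; exists (m - 1, n); split; [left|right]; apply: pairE; lia.
  - have [h5|[h5|[h5|[h5|h5]]]] : (m' = m /\ n' = n) \/ (m' = m /\ n' = n - 2) \/
       (m' = m + 2 /\ n' = n) \/ (m' = m + 2 /\ n' = n - 2) \/ (m' = m + 1 /\ n' = n - 1) by lia.
    + right; left; exists (m - 1, n); split; left; apply: pairE; lia.
    + right; left; exists (m - 1, n); split; [left|right]; apply: pairE; lia.
    + right; left; exists (m + 1, n); split; [right|left]; apply: pairE; lia.
    + right; left; exists (m + 1, n); split; right; apply: pairE; lia.
    + by right; right; left; split => //; lia.
  - have [h5|[h5|[h5|[h5|h5]]]] : (m = m' /\ n = n') \/ (m = m' /\ n = n' - 2) \/
       (m = m' + 2 /\ n = n') \/ (m = m' + 2 /\ n = n' - 2) \/ (m = m' + 1 /\ n = n' - 1) by lia.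
    + right; left; exists (m' - 1, n'); split; left; apply: pairE; lia.
    + right; left; exists (m' - 1, n'); split; [right|left]; apply: pairE; lia.
    + right; left; exists (m' + 1, n'); split; [left|right]; apply: pairE; lia.
    + right; left; exists (m' + 1, n'); split; right; apply: pairE; lia.
    + by right; right; right; split => //; lia.
  - have [h5|[h5|h5]] : n' = n \/ n' = n + 2 \/ n' = n - 2 by lia.
    + by left; split => //; lia.
    + right; left; exists (m - 1, n + 2); split; [right|left]; apply: pairE; lia.
    + right; left; exists (m - 1, n); split; [left|right]; apply: pairE; lia.
case: key => [[-> [-> ->]]|[[W [hW hW']]|[hc|hc]]].
- by left.
- by right; left; exists W; split.
- by right; right; left.
- by right; right; right.
Qed.

End Geo.

Set Implicit Arguments. Unset Strict Implicit. Unset Printing Implicit Defensive.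

Section Geo2.
Variable R : realType.
Variable w : config.

Lemma no_crossing e e' : present w e -> present w e' -> ~ crossing e e'.
Proof.
case: e => m n h; case: e' => m' n' h'.
rewrite /crossing /present /face_of /= => -[_ h1] [_ h2] [hh [hh' [hm hn]]].
move: hh hh' h1 h2 => -> /negbTE -> /=; rewrite hm hn zs1 zs2.
rewrite /LL /UL /UR /LR => -[_ _ h3] [h4 _ _].
by apply: h3; rewrite h4.
Qed.

Lemma near_present e e' (p q : R * R) : present w e -> present w e' ->
  dseg e p -> dseg e' q -> `|p.1 - q.1| < 2^-1 -> `|p.2 - q.2| < 2^-1 ->
  e = e' \/ share e e'.
Proof.
move=> pe pe' hp hq h1 h2.
have [/andP [a1 a2] /andP [a3 a4]] := dseg_box hp.
have [/andP [b1 b2] /andP [b3 b4]] := dseg_box hq.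
have [c1 c2] := box_meet a1 a2 b1 b2 h1.
have [c3 c4] := box_meet a3 a4 b3 b4 h2.
have := near_int (proj1 pe) (proj1 pe') c1 c2 c3 c4.
case=> [->|[hs|[hc|hc]]]; [by left | by right | |].
  by exfalso; apply: no_crossing pe pe' hc.
by exfalso; apply: no_crossing pe' pe hc.
Qed.

Lemma meet_present e e' (p : R * R) : present w e -> present w e' ->
  dseg e p -> dseg e' p -> e = e' \/ share e e'.
Proof.
move=> pe pe' hp hq; apply: near_present pe pe' hp hq _ _;
  by rewrite subrr normr0; lra.
Qed.

Definition wcenter (W : int * int) : R * R := (W.1%:~R + 2^-1, W.2%:~R + 2^-1).

Lemma ends_center e W : ends e W -> dseg e (wcenter W).
Proof.
case: e => m n []; rewrite /ends /end0 /end1 /dseg /wcenter /=;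
  case=> ->; rewrite /= ?intrD ?intrB ?rmorphN ?rmorph1;
  (split; [lra | apply/andP; split; lra]).
Qed.

Lemma dseg_connected e : connected (@dseg R e).
Proof.
case: e => m n []; rewrite /dseg /=.
- have -> : [set p : R * R | p.2 = n%:~R + 2^-1 /\ m%:~R - 2^-1 <= p.1 <= m%:~R + 3 / 2] =
     [set (t, n%:~R + 2^-1) | t in `[m%:~R - 2^-1, m%:~R + 3 / 2]].
    apply/seteqP; split.
      by case=> x y /= [-> h]; exists x => //; rewrite in_itv /=.
    by move=> _ [x hx <-] /=; split => //; move: hx; rewrite /= in_itv.
  apply: connected_continuous_connected.
    by apply/connected_intervalP; exact: interval_is_interval.
  apply: continuous_subspaceT => x.
  exact: (cvg_pair cvg_id (cvg_cst _)).
- have -> : [set p : R * R | p.1 = m%:~R - 2^-1 /\ n%:~R + 2^-1 <= p.2 <= n%:~R + 5 / 2] =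
     [set (m%:~R - 2^-1, t) | t in `[n%:~R + 2^-1, n%:~R + 5 / 2]].
    apply/seteqP; split.
      by case=> x y /= [-> h]; exists y => //; rewrite in_itv /=.
    by move=> _ [x hx <-] /=; split => //; move: hx; rewrite /= in_itv.
  apply: connected_continuous_connected.
    by apply/connected_intervalP; exact: interval_is_interval.
  apply: continuous_subspaceT => x.
  exact: (cvg_pair (cvg_cst _) cvg_id).
Qed.

End Geo2.

Set Implicit Arguments. Unset Strict Implicit. Unset Printing Implicit Defensive.

Section Geo3.
Variable R : realType.
Variable w : config.
Local Notation PS := (@present_set R w).
Implicit Types (C : set (R * R)) (p q : R * R).

Lemma share_sym e e' : share e e' -> share e' e.
Proof. by case=> W [h1 h2]; exists W. Qed.

Lemma ps_dseg e : present w e -> @dseg R e `<=` PS.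
Proof. by move=> he p hp; exists e. Qed.

Lemma ps_ex p : PS p -> exists e, present w e /\ @dseg R e p.
Proof. by case=> e he hp; exists e. Qed.

Lemma contour_sub C : is_contour w C -> C `<=` PS.
Proof. by case=> x _ ->; apply: connected_component_sub. Qed.

Lemma contour_eq C p : is_contour w C -> C p -> C = connected_component PS p.
Proof. by case=> x _ -> hp; apply: same_connected_component. Qed.

Lemma contour_connected C : is_contour w C -> connected C.
Proof. by case=> x _ ->; apply: component_connected. Qed.

Lemma seg_in_contour C e p : is_contour w C -> present w e -> C p -> @dseg R e p ->
  @dseg R e `<=` C.
Proof.
move=> hC he hCp hp; rewrite (contour_eq hC hCp).
apply: connected_component_max => //; [exact: ps_dseg | exact: dseg_connected].
Qed.

Lemma cedges_HE2 C e e' : is_contour w C -> contour_edges w C e -> present w e' ->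
  share e e' -> contour_edges w C e'.
Proof.
move=> hC [he hsub] he' [W [h1 h2]]; split => //.
apply: (seg_in_contour hC he' (hsub _ (ends_center R h1))).
exact: ends_center.
Qed.

Lemma sep_aux (F1 F2 : set dedge) : (forall e, F1 e -> present w e) -> (forall e, F2 e -> present w e) ->
  (forall e1 e2, F1 e1 -> F2 e2 -> e1 = e2 \/ share e1 e2 -> False) ->
  closure (\bigcup_(e in F1) @dseg R e) `&` (\bigcup_(e in F2) @dseg R e) = set0.
Proof.
move=> hF1 hF2 hno; apply/seteqP; split => // q [hcl [e2 he2 hq]].
have hB : nbhs q (ball q (2^-1 : R)) by apply: nbhsx_ballx; lra.
have [p [[e1 he1 hp] hbp]] := hcl _ hB.
have [b1 b2] := hbp.
rewrite -!ball_normE /ball_ in b1 b2.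
have [h|h] := near_present (hF2 _ he2) (hF1 _ he1) hq hp b1 b2.
  by apply: (hno e1 e2) => //; left.
by apply: (hno e1 e2) => //; right; apply: share_sym.
Qed.

Lemma cedges_HE3 C (Q : dedge -> Prop) : is_contour w C ->
  (forall e e', contour_edges w C e -> contour_edges w C e' -> share e e' -> Q e -> Q e') ->
  forall e e', contour_edges w C e -> contour_edges w C e' -> Q e -> Q e'.
Proof.
move=> hC hQ e1 e2 he1 he2 hq1; apply: contrapT => hq2.
pose F1 := [set e | contour_edges w C e /\ Q e].
pose F2 := [set e | contour_edges w C e /\ ~ Q e].
have hsep : separated (\bigcup_(e in F1) @dseg R e) (\bigcup_(e in F2) @dseg R e).
  split.
    apply: sep_aux; [by move=> e [[]] | by move=> e [[]] |].
    move=> a b [ha qa] [hb qb] [hab|hab]; first by apply: qb; rewrite -hab.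
    by apply: qb; apply: (hQ a b).
  rewrite setIC; apply: sep_aux; [by move=> e [[]] | by move=> e [[]] |].
  move=> a b [ha qa] [hb qb] [hab|hab]; first by apply: qa; rewrite hab.
  by apply: qa; apply: (hQ b a) => //; apply: share_sym.
have hcov : C `<=` (\bigcup_(e in F1) @dseg R e) `|` (\bigcup_(e in F2) @dseg R e).
  move=> p hp.
  have [e [he hpe]] := ps_ex (contour_sub hC hp).
  have hce : contour_edges w C e by split => //; apply: seg_in_contour hC he hp hpe.
  have [qe|qe] := pselect (Q e); [left | right]; by exists e.
have hc1 : @dseg R e1 (wcenter R (end0 e1)) by apply: ends_center; left.
have hc2 : @dseg R e2 (wcenter R (end0 e2)) by apply: ends_center; left.
case: (connected_subset hsep hcov (contour_connected hC)) => hsub.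
  have [e [he qe] hp] := hsub _ (proj2 he2 _ hc2).
  have [h|h] := meet_present (proj1 he2) (proj1 he) hc2 hp.
    by apply: hq2; rewrite h.
  by apply: hq2; apply: (hQ e e2) => //; apply: share_sym.
have [e [he qe] hp] := hsub _ (proj2 he1 _ hc1).
have [h|h] := meet_present (proj1 he1) (proj1 he) hc1 hp.
  by apply: qe; rewrite -h.
by apply: qe; apply: (hQ e1 e).
Qed.

Lemma contour_inf_E C : infinite_contour w C -> contourE w (contour_edges w C).
Proof.
move=> [hC hinf]; split.
- by move=> e [].
- by move=> e e' he he' hs; exact: (cedges_HE2 hC he he' hs).
- by move=> Q hQ e e' he he'; exact: (cedges_HE3 hC hQ he he').
- exact: hinf.
Qed.

Lemma contour_same C1 C2 e : is_contour w C1 -> is_contour w C2 ->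
  contour_edges w C1 e -> contour_edges w C2 e -> C1 = C2.
Proof.
move=> h1 h2 [_ s1] [_ s2].
have hc : @dseg R e (wcenter R (end0 e)) by apply: ends_center; left.
by rewrite (contour_eq h1 (s1 _ hc)) (contour_eq h2 (s2 _ hc)).
Qed.

End Geo3.

Set Implicit Arguments. Unset Strict Implicit. Unset Printing Implicit Defensive.

Section Geo4.
Variable R : realType.
Implicit Types (C : set (R * R)) (p q : R * R).

Lemma int_le_R (a b : int) : a <= b -> (a%:~R : R) <= b%:~R.
Proof. by rewrite ler_int. Qed.

Lemma half_sq (b n : int) : 4^-1 <= ((b%:~R : R) - (n%:~R + 2^-1)) ^+ 2.
Proof.
have [h|h] : b <= n \/ n + 1 <= b by lia.
  have := int_le_R h; nra.
have := int_le_R h; rewrite intrD; nra.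
Qed.

Lemma half_sq_far (b n : int) : b <> n -> b <> n + 1 ->
  2^-1 <= ((b%:~R : R) - (n%:~R + 2^-1)) ^+ 2.
Proof.
move=> h1 h2.
have [h|h] : b + 1 <= n \/ n + 2 <= b by lia.
  have := int_le_R h; rewrite intrD; nra.
have := int_le_R h; rewrite intrD; nra.
Qed.

Lemma seg_far (a m : int) (x : R) : m%:~R - 2^-1 <= x -> x <= m%:~R + 3 / 2 ->
  a <> m -> a <> m + 1 -> 4^-1 <= ((a%:~R : R) - x) ^+ 2.
Proof.
move=> h1 h2 h3 h4.
have [h|h] : a + 1 <= m \/ m + 2 <= a by lia.
  have := int_le_R h; rewrite intrD; nra.
have := int_le_R h; rewrite intrD; nra.
Qed.

Definition sqd (v : vtx) p : R := ((v.1%:~R : R) - p.1) ^+ 2 + ((v.2%:~R : R) - p.2) ^+ 2.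

Lemma sqd_bounds e v q : dseg e q ->
  4^-1 <= sqd v q /\ (~ corner (face_of e) v -> 2^-1 <= sqd v q).
Proof.
case: v => a b; case: e => m n [];
  rewrite /dseg /sqd /face_of /corner /= => -[hq /andP [h1 h2]].
- rewrite hq; split.
    have := half_sq b n; have := sqr_ge0 ((a%:~R : R) - q.1); lra.
  move=> hnc.
  have [hb|hb] := pselect (b = n \/ b = n + 1).
    have ha : a <> m /\ a <> m + 1.
      by split => ha; apply: hnc; case: hb => ->; rewrite ha; tauto.
    have := seg_far h1 h2 (proj1 ha) (proj2 ha); have := half_sq b n; lra.
  have := half_sq_far (fun h => hb (or_introl h)) (fun h => hb (or_intror h)).
  have := sqr_ge0 ((a%:~R : R) - q.1); lra.
- rewrite hq.
  have E1 : (m%:~R : R) - 2^-1 = (m - 1)%:~R + 2^-1 by rewrite intrB; lra.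
  have E2 : (n%:~R : R) + 2^-1 = (n + 1)%:~R - 2^-1 by rewrite intrD; lra.
  have E3 : (n%:~R : R) + 5 / 2 = (n + 1)%:~R + 3 / 2 by rewrite intrD; lra.
  rewrite E1; rewrite E2 E3 in h1 h2.
  split.
    have := half_sq a (m - 1); have := sqr_ge0 ((b%:~R : R) - q.2); lra.
  move=> hnc.
  have [ha|ha] := pselect (a = m - 1 \/ a = m - 1 + 1).
    have hb : b <> n + 1 /\ b <> n + 1 + 1.
      split => hb; apply: hnc; case: ha => ->; rewrite hb ?zs2; tauto.
    have := seg_far h1 h2 (proj1 hb) (proj2 hb); have := half_sq a (m - 1); lra.
  have := half_sq_far (fun h => ha (or_introl h)) (fun h => ha (or_intror h)).
  have := sqr_ge0 ((b%:~R : R) - q.2); lra.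
Qed.

Lemma sqd_attain e v : corner (face_of e) v -> exists2 q, dseg e q & sqd v q = 4^-1.
Proof.
case: v => a b; case: e => m n []; rewrite /dseg /sqd /face_of /corner /=.
- move=> hc.
  have [ha hb] : (a = m \/ a = m + 1) /\ (b = n \/ b = n + 1).
    by case: hc => [[-> ->]|[[-> ->]|[[-> ->]|[-> ->]]]]; tauto.
  exists (a%:~R, n%:~R + 2^-1) => /=.
    split => //; case: ha => ->; rewrite ?intrD; apply/andP; split; lra.
  by case: hb => ->; rewrite ?intrD; lra.
- move=> hc.
  have [ha hb] : (a = m - 1 \/ a = m - 1 + 1) /\ (b = n + 1 \/ b = n + 1 + 1).
    by case: hc => [[-> ->]|[[-> ->]|[[-> ->]|[-> ->]]]]; tauto.
  exists (m%:~R - 2^-1, b%:~R) => /=.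
    split => //; case: hb => ->; rewrite ?intrD; apply/andP; split; lra.
  by case: ha => ->; rewrite ?intrD ?intrB; lra.
Qed.

Lemma sqrt_ge (x : R) : 4^-1 <= x -> 2^-1 <= Num.sqrt x.
Proof.
move=> hx; have h0 := sqrtr_ge0 x; have h2 := sqr_sqrtr (le_trans _ hx).
have h : (0 : R) <= 4^-1 by lra.
move: (h2 h); nra.
Qed.

Lemma sqrt_gt (x : R) : 2^-1 <= x -> 2^-1 < Num.sqrt x.
Proof.
move=> hx; have h0 := sqrtr_ge0 x; have h2 := sqr_sqrtr (le_trans _ hx).
have h : (0 : R) <= 2^-1 by lra.
move: (h2 h); nra.
Qed.

Lemma sqrt_quarter : Num.sqrt (4^-1 : R) = 2^-1.
Proof.
have h0 := sqrtr_ge0 (4^-1 : R).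
have h : (0 : R) <= 4^-1 by lra.
have h2 := sqr_sqrtr h.
apply/eqP; rewrite eq_le; apply/andP; split; nra.
Qed.

Lemma eucl_sqd v q : eucl (vpt R v) q = Num.sqrt (sqd v q).
Proof. by []. Qed.

Lemma dist_corner e v : corner (face_of e) v -> dist_set (vpt R v) (dseg e) = 2^-1.
Proof.
move=> hc; have [q0 hq0 hsq] := sqd_attain hc.
rewrite /dist_set.
have hlb : lbound [set eucl (vpt R v) q | q in dseg e] (2^-1).
  move=> _ [q hq <-]; rewrite eucl_sqd; apply: sqrt_ge.
  exact: (proj1 (sqd_bounds v hq)).
apply/eqP; rewrite eq_le; apply/andP; split.
  have := @ge_inf R [set eucl (vpt R v) q | q in dseg e].
  move=> /(_ _) h.
  have : inf [set eucl (vpt R v) q | q in dseg e] <= eucl (vpt R v) q0.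
    apply: h; last by exists q0.
    by exists (2^-1).
  by rewrite eucl_sqd hsq sqrt_quarter.
apply: lb_le_inf => //; by exists (eucl (vpt R v) q0), q0.
Qed.

Lemma dist_half_corner e v : dist_set (vpt R v) (dseg e) = 2^-1 -> corner (face_of e) v.
Proof.
move=> hd; apply: contrapT => hnc.
have [q0 hq0] : exists q, @dseg R e q by exists (wcenter R (end0 e)); apply: ends_center; left.
have hlb : lbound [set eucl (vpt R v) q | q in dseg e] (Num.sqrt 2^-1).
  move=> _ [q hq <-]; rewrite eucl_sqd; apply: ler_wsqrtr.
  exact: (proj2 (sqd_bounds v hq)).
have := @lb_le_inf R [set eucl (vpt R v) q | q in dseg e] _ _ hlb.
rewrite -/(dist_set _ _) hd => /(_ _).
have hgt := @sqrt_gt (2^-1) (lexx _).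
move=> h; have := h (ex_intro _ _ (ex_intro2 _ _ q0 hq0 erefl)); lra.
Qed.

End Geo4.

Set Implicit Arguments. Unset Strict Implicit. Unset Printing Implicit Defensive.

Lemma Gadj_adj u v : G_adj u v -> adj u v.
Proof.
case: u => a b; case: v => c d; rewrite /G_adj /adj /nb /=.
case=> [[-> [h|h]]|[-> [h|h]]].
- by exists false; right; apply: pairE; lia.
- by exists false; left; apply: pairE; lia.
- by exists true; right; apply: pairE; lia.
- by exists true; left; apply: pairE; lia.
Qed.

Lemma adj_Gadj u v : adj u v -> G_adj u v.
Proof.
case: u => a b; case: v => c d; rewrite /G_adj /adj /nb /=.
case=> [] [] [] [-> ->] /=; (try by right; split => //; lia); by left; split => //; lia.
Qed.

Definition gadjb (u v : vtx) : bool := `[< G_adj u v >].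

Section Clus.
Variable w : config.

Lemma path_creach (S : set vtx) x q : const_on w S -> path gadjb x q ->
  (forall y, y \in x :: q -> S y) -> creach w x (last x q).
Proof.
move=> hc; elim: q x => [|y q IH] x /=; first by move=> _ _; apply: cr0.
move=> /andP [/asboolP hxy hp] hS.
have h : creach w y (last y q).
  by apply: IH hp _ => z hz; apply: hS; rewrite inE hz orbT.
apply: creach_cons (Gadj_adj hxy) _ h.
by apply: hc; apply: hS; rewrite ?inE ?eqxx ?orbT.
Qed.

Lemma Gpath_creach (S : set vtx) u v p : const_on w S ->
  [/\ head u p = u, last u p = v, (forall x, x \in p -> S x) &
      (forall i, (i.+1 < size p)%N -> G_adj (nth u p i) (nth u p i.+1))] ->
  S u -> creach w u v.
Proof.
move=> hc; case: p => [|x q] /= [hh hl hS hadj] hu.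
  by rewrite -hl; apply: cr0.
rewrite -hl; subst x.
apply: (path_creach hc) => //.
apply/(pathP u) => i hi; apply/asboolP; exact: hadj.
Qed.

Lemma creach_path a v : creach w a v -> exists q, [/\ path gadjb a q, last a q = v &
  forall x, x \in a :: q -> creach w a x].
Proof.
elim=> [|u u' _ [q [hp hl hin]] ha hw].
  by exists [::]; split => // x; rewrite inE => /eqP ->; apply: cr0.
exists (rcons q u'); split.
- by rewrite rcons_path hp hl; apply/asboolP; apply: adj_Gadj.
- by rewrite last_rcons.
- move=> x; rewrite -rcons_cons mem_rcons inE => /orP [/eqP ->|hx].
    by apply: crS ha hw; rewrite -hl; apply: hin; exact: (mem_last a q).
  exact: hin.
Qed.

Lemma creach_cluster b : is_cluster w (creach w b).
Proof.
split.
- by exists b; apply: cr0.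
- move=> a v ha hv.
  have hav : creach w a v by apply: creach_trans (creach_sym ha) hv.
  have [q [hp hl hin]] := creach_path hav.
  exists (a :: q); split => //.
  + by move=> x hx; apply: creach_trans ha (hin x hx).
  + move=> i hi; have := (pathP a hp i); rewrite /= in hi => /(_ hi) /asboolP //.
- by move=> x y hx hy; rewrite (creach_w hx) (creach_w hy).
- move=> S hsub hconn hconst.
  apply/seteqP; split => // s hs.
  have hb : S b by apply: hsub; apply: cr0.
  have [p hp] := hconn b s hb hs.
  exact: (Gpath_creach hconst hp hb).
Qed.

Lemma cluster_eq xi b : is_cluster w xi -> xi b -> xi = creach w b.
Proof.
move=> [hne hconn hconst hmax] hb.
have hsub : xi `<=` creach w b.
  move=> u hu; have [p hp] := hconn b u hb hu.
  exact: (Gpath_creach hconst hp hb).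
have [_ hc2 hc3 _] := creach_cluster b.
by apply: esym; apply: hmax.
Qed.

End Clus.

Set Implicit Arguments. Unset Strict Implicit. Unset Printing Implicit Defensive.

Section Geo6.
Variable R : realType.
Implicit Types (C : set (R * R)) (p q : R * R).

Definition gseg (u : vtx) (d : bool) : set (R * R) :=
  if d then [set p | p.2 = u.2%:~R /\ u.1%:~R <= p.1 <= u.1%:~R + 1]
  else [set p | p.1 = u.1%:~R /\ u.2%:~R <= p.2 <= u.2%:~R + 1].

Lemma int_of_R (a b : int) (x : R) : a%:~R <= x -> x < b%:~R -> a < b.
Proof. move=> h1 h2; rewrite -(ltr_int R); exact: le_lt_trans h1 h2. Qed.

Lemma gseg_connected u d : connected (gseg u d).
Proof.
case: u => a b; case: d; rewrite /gseg /=.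
- have -> : [set p : R * R | p.2 = b%:~R /\ a%:~R <= p.1 <= a%:~R + 1] =
     [set (t, b%:~R) | t in `[a%:~R, a%:~R + 1]].
    apply/seteqP; split.
      by case=> x y /= [-> h]; exists x => //; rewrite in_itv /=.
    by move=> _ [x hx <-] /=; split => //; move: hx; rewrite /= in_itv.
  apply: connected_continuous_connected.
    by apply/connected_intervalP; exact: interval_is_interval.
  apply: continuous_subspaceT => x.
  exact: (cvg_pair cvg_id (cvg_cst _)).
- have -> : [set p : R * R | p.1 = a%:~R /\ b%:~R <= p.2 <= b%:~R + 1] =
     [set (a%:~R, t) | t in `[b%:~R, b%:~R + 1]].
    apply/seteqP; split.
      by case=> x y /= [-> h]; exists y => //; rewrite in_itv /=.
    by move=> _ [x hx <-] /=; split => //; move: hx; rewrite /= in_itv.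
  apply: connected_continuous_connected.
    by apply/connected_intervalP; exact: interval_is_interval.
  apply: continuous_subspaceT => x.
  exact: (cvg_pair (cvg_cst _) cvg_id).
Qed.

Lemma gseg_ends u d : gseg u d (vpt R u) /\ gseg u d (vpt R (nb u d)).
Proof.
case: u => a b; case: d; rewrite /gseg /vpt /nb /= ?intrD; split; split => //;
  apply/andP; split; lra.
Qed.


Lemma gseg_dseg u d f p : is_edge f -> gseg u d p -> dseg f p -> f = crs u d.
Proof.
case: u => a b; case: f => m n h; case: p => x y; rewrite /is_edge /gseg /dseg /crs /=.
case: d; case: h => /= he.
    move=> [h1 _] [h2 _]; exfalso; apply: (@int_half_neq R b n); rewrite -h1 h2 //.
  move=> [h1 /andP [h2 h3]] [h4 /andP [h5 h6]].
  have i1 : a < m.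
    by apply: (@int_of_R _ _ x) => //; move: h1 h2 h3 h4 h5 h6; set t1 := (a%:~R : R); set t2 := (m%:~R : R); move=> *; lra.
  have i2 : m < a + 1 + 1.
    by apply: (@int_of_R _ _ (x + 2^-1)); rewrite ?intrD1; move: h1 h2 h3 h4 h5 h6; set t1 := (a%:~R : R); set t2 := (m%:~R : R); move=> *; lra.
  have i3 : n < b.
    by apply: (@int_of_R _ _ (y - 2^-1)); move: h1 h2 h3 h4 h5 h6; set t1 := (b%:~R : R); set t2 := (n%:~R : R); move=> *; lra.
  have i4 : b < n + 1 + 1 + 1.
    by apply: (@int_of_R _ _ y); rewrite ?intrD1; move: h1 h2 h3 h4 h5 h6; set t1 := (b%:~R : R); set t2 := (n%:~R : R); move=> *; lra.
  by case: ifP; rewrite /blk => hb; congr DEdge; lia.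
  move=> [h1 /andP [h2 h3]] [h4 /andP [h5 h6]].
  have i1 : b < n + 1.
    by apply: (@int_of_R _ _ y); rewrite ?intrD1; move: h1 h2 h3 h4 h5 h6; set t1 := (b%:~R : R); set t2 := (n%:~R : R); move=> *; lra.
  have i2 : n < b + 1.
    by apply: (@int_of_R _ _ (y - 2^-1)); rewrite ?intrD1; move: h1 h2 h3 h4 h5 h6; set t1 := (b%:~R : R); set t2 := (n%:~R : R); move=> *; lra.
  have i3 : m - 1 < a.
    by apply: (@int_of_R _ _ (x - 2^-1)); rewrite ?intrB ?rmorph1; move: h1 h2 h3 h4 h5 h6; set t1 := (a%:~R : R); set t2 := (m%:~R : R); move=> *; lra.
  have i4 : a < m + 1 + 1.
    by apply: (@int_of_R _ _ x); rewrite ?intrD1; move: h1 h2 h3 h4 h5 h6; set t1 := (a%:~R : R); set t2 := (m%:~R : R); move=> *; lra.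
  by case: ifP; rewrite /blk => hb; congr DEdge; lia.
move=> [h1 _] [h2 _]; exfalso; apply: (@int_half_neq R a (m - 1)).
by rewrite -h1 h2 intrB ?rmorph1; set t2 := (m%:~R : R); lra.
Qed.

Definition gmid (u : vtx) (d : bool) : R * R :=
  if d then (u.1%:~R + 2^-1, u.2%:~R) else (u.1%:~R, u.2%:~R + 2^-1).

Lemma gmid_in u d : gseg u d (gmid u d) /\ dseg (crs u d) (gmid u d).
Proof.
case: u => a b; case: d; rewrite /gseg /gmid /crs /=; case: (blk a b); rewrite /dseg /=;
(split; [split => //; apply/andP; split; lra|]);
rewrite ?intrD ?intrB ?rmorph1 ?rmorphN;
set ta := (a%:~R : R); set tb := (b%:~R : R);
(split; [lra | apply/andP; split; lra]).
Qed.

Lemma in_comp (A K Rg : set (R * R)) p x : Rg = connected_component A p ->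
  connected K -> K `<=` A -> K x -> Rg x -> K `<=` Rg.
Proof.
move=> -> hK hKA hKx hRx.
rewrite (same_connected_component hRx).
exact: connected_component_max.
Qed.

Variable w : config.

Lemma partIV (C1 : set (R * R)) (CC : set (set (R * R))) (Rg : set (R * R)) p b :
  is_contour w C1 -> (forall C, CC C -> is_contour w C) -> ~ CC C1 ->
  Rg = connected_component (~` \bigcup_(C in CC) C) p -> C1 `<=` Rg ->
  inc (contour_edges w C1) b -> forall v, creach w b v -> Rg (vpt R v).
Proof.
move=> hC1 hCC hn1 hRg hsub [u0 [d0 [hb [hpr hsubC]]]].
set Y := \bigcup_(C in CC) C.
have hY : forall u d, (w u = w (nb u d) \/ contour_edges w C1 (crs u d)) ->
    gseg u d `<=` ~` Y.
  move=> u d hud q hq [C hC hCq].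
  have [f [hf hfq]] := ps_ex (contour_sub (hCC _ hC) hCq).
  have hfe := gseg_dseg (proj1 hf) hq hfq.
  case: hud => [he|[_ hs]].
    by apply: (present_crs_diff (w := w)) he; rewrite -hfe.
  apply: hn1.
  have hq1 : C1 q by apply: hs; rewrite -hfe.
  have -> : C1 = C.
    by rewrite (contour_eq hC1 hq1) -(contour_eq (hCC _ hC) hCq).
  exact: hC.
have hmid := gmid_in u0 d0.
have hK0 : gseg u0 d0 `<=` Rg.
  have hc := @gseg_connected u0 d0.
  have hA : gseg u0 d0 `<=` ~` Y by apply: hY; right; split.
  have hR : Rg (gmid u0 d0) by apply: hsub; apply: hsubC; exact: (proj2 hmid).
  exact: (in_comp hRg hc hA (proj1 hmid) hR).
have hbR : Rg (vpt R b).
  have [g1 g2] := gseg_ends u0 d0.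
  by apply: hK0; case: hb => ->.
move=> v; elim=> [//|u u' _ IH [d [hd|hd]] he].
  rewrite hd in he *.
  have [g1 g2] := gseg_ends u d.
    have hA : gseg u d `<=` ~` Y by apply: hY; left.
  exact: (in_comp hRg (@gseg_connected u d) hA g1 IH g2).
rewrite hd in he IH *.
have [g1 g2] := gseg_ends u' d.
have hA : gseg u' d `<=` ~` Y by apply: hY; left.
exact: (in_comp hRg (@gseg_connected u' d) hA g2 IH g1).
Qed.

End Geo6.

Lemma inc_incident (R : realType) w (C : set (R * R)) b :
  inc (contour_edges w C) b -> is_incident w (creach w b) C.
Proof.
move=> [u [d [hv he]]]; exists b, (crs u d); split => //; first exact: cr0.
apply: dist_corner; have [c1 c2] := crs_corner u d.
by case: hv => ->.
Qed.

Lemma incident_inc (R : realType) w (C : set (R * R)) xi :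
  is_incident w xi C -> exists v, xi v /\ inc (contour_edges w C) v.
Proof.
move=> [v [e [hxi he hd]]].
have hc := dist_half_corner hd.
have [u [d [hcr hv]]] := corner_crs (proj1 he) hc.
by exists v; split => //; exists u, d; split => //; rewrite hcr.
Qed.

Lemma part2 (R : realType) w (hw : in_Omega w) (C1 C2 : set (R * R)) :
  infinite_contour w C1 -> infinite_contour w C2 -> C1 <> C2 ->
  exists b, inc (contour_edges w C1) b /\ infinite_set (creach w b).
Proof.
move=> h1 h2 hne.
apply: (comb2 hw (contour_inf_E h1) (contour_inf_E h2)).
move=> e he1 he2; apply: hne.
exact: (contour_same h1.1 h2.1 he1 he2).
Qed.

Unset Implicit Arguments.

Theorem lemma2p5 (R : realType) (w : config) (hw : in_Omega w) :
  (* (I) *)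
  ((exists C1 C2 : set (R * R),
      [/\ infinite_contour w C1, infinite_contour w C2 & C1 <> C2]) ->
   exists xi, infinite_cluster w xi)
  (* (II) *)
  /\ (forall C1 C2 : set (R * R),
        infinite_contour w C1 -> infinite_contour w C2 -> C1 <> C2 ->
        exists xi, infinite_cluster w xi /\ is_incident w xi C1)
  (* (III) *)
  /\ (forall (xi : set vtx) (C1 C2 : set (R * R)),
        is_cluster w xi -> infinite_contour w C1 -> infinite_contour w C2 ->
        C1 <> C2 -> is_incident w xi C1 -> is_incident w xi C2 ->
        infinite_set xi)
  (* (IV) *)
  /\ (forall (C1 : set (R * R)) (CC : set (set (R * R))),
        infinite_contour w C1 -> CC !=set0 ->
        (forall C, CC C -> infinite_contour w C) -> ~ CC C1 ->
        forall Rg : set (R * R),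
          (exists p, Rg = connected_component (~` \bigcup_(C in CC) C) p) ->
          C1 `<=` Rg ->
          exists xi, infinite_cluster w xi /\ (forall v, xi v -> Rg (@vpt R v))).
Proof.
split.
  move=> [C1 [C2 [h1 h2 hne]]].
  have [b [_ hinf]] := @part2 R w hw _ _ h1 h2 hne.
  by exists (creach w b); split => //; apply: creach_cluster.
split.
  move=> C1 C2 h1 h2 hne.
  have [b [hb hinf]] := @part2 R w hw _ _ h1 h2 hne.
  exists (creach w b); split; last exact: (@inc_incident R).
  by split => //; apply: creach_cluster.
split.
  move=> xi C1 C2 hxi h1 h2 hne hi1 hi2 hfin.
  have [v1 [hv1 hinc1]] := @incident_inc R _ _ _ hi1.
  have [v2 [hv2 hinc2]] := @incident_inc R _ _ _ hi2.
  have hxe := cluster_eq hxi hv1.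
  rewrite hxe in hfin hv2.
  have [e [he1 he2]] := comb3 hw (contour_inf_E h1) (contour_inf_E h2) hfin (cr0 w v1) hv2 hinc1 hinc2.
  exact: hne (contour_same h1.1 h2.1 he1 he2).
move=> C1 CC h1 [C2 hC2] hCC hn Rg [p hRg] hsub.
have hne : C1 <> C2 by move=> h; apply: hn; rewrite h.
have [b [hb hinf]] := @part2 R w hw _ _ h1 (hCC _ hC2) hne.
exists (creach w b); split; first by split => //; apply: creach_cluster.
apply: (partIV h1.1 _ hn hRg hsub hb).
by move=> C hC; exact: (hCC _ hC).1.
Qed.
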